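(* Let $L_x, L_y>0$, $L_{xy}\geq 0$, $0<\mu_x\le L_x$, $0<\mu_y\le L_y$, and let $F\in\mathcal{F}(L_x, L_y, L_{xy}, \mu_x, \mu_y)$ (defined in the context). Set $L=\max\{L_x, L_y\}$, $\mu=\min\{\mu_x, \mu_y\}>0$, and define $\alpha:\left[0, \tfrac{2\mu}{\mu L+L_{xy}^2}\right]\to\mathbb{R}$ by $$ \alpha(t)=1+\tfrac{1}{2}\left(L^2+\mu^2+2L_{xy}^2\right)t^2-(L+\mu)t +\tfrac{1}{2}(L-\mu)t\sqrt{(Lt + \mu t - 2)^2 + 4L_{xy}^2t^2} $$ (the bound factor for one step of the gradient descent-ascent method $x^{2}=x^1-t\nabla_x F(x^1, y^1)$, $y^{2}=y^1+t\nabla_y F(x^1, y^1)$, in the inequality $\|x^2-x^\star\|^2+\|y^2-y^\star\|^2\leq\alpha(t)(\|x^1-x^\star\|^2+\|y^1-y^\star\|^2)$, where $(x^\star,y^\star)$ is the saddle point of $F$). Then the minimizer of $\alpha$ over its domain (the optimal step length with respect to this bound) is $$ t^\star=\tfrac{2\left((L+\mu)\sqrt{L_{xy}^2+L\mu}+L_{xy}(\mu-L)\right)} {\left(4L_{xy}^2+(L+\mu)^2\right)\sqrt{L_{xy}^2+L\mu}}, $$ and $$ \alpha(t^\star)=\tfrac{8 L_{xy} \left(L^2-\mu^2\right) \sqrt{L \mu+L_{xy}^2}+\left(L^2-\mu^2\right)^2+16 L_{xy}^2 \left(L \mu+L_{xy}^2\right)}{\left((L+\mu)^2+4 L_{xy}^2\right)^2}.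 $$
   Context: $\mathcal{F}(L_x, L_y, L_{xy}, \mu_x, \mu_y)$ denotes the set of differentiable $F:\mathbb{R}^n\times\mathbb{R}^m\to\mathbb{R}$ such that for all $x,x_1,x_2,y,y_1,y_2$: $\|\nabla_x F(x_2, y)-\nabla_x F(x_1, y)\|\leq L_x\|x_2-x_1\|$; $\|\nabla_y F(x, y_2)-\nabla_y F(x, y_1)\|\leq L_y\|y_2-y_1\|$; $\|\nabla_x F(x, y_2)-\nabla_x F(x, y_1)\|\leq L_{xy}\|y_2-y_1\|$; $\|\nabla_y F(x_2, y)-\nabla_y F(x_1, y)\|\leq L_{xy}\|x_2-x_1\|$; $F(\cdot, y)-\tfrac{\mu_x}{2}\|\cdot\|^2$ convex for every $y$ and $F(x,\cdot)+\tfrac{\mu_y}{2}\|\cdot\|^2$ concave for every $x$. *)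

(* Defs.v *)
From HB Require Import structures.
From mathcomp Require Import all_boot all_order all_algebra.
From mathcomp Require Import all_classical all_reals all_analysis.
Set Implicit Arguments. Unset Strict Implicit. Unset Printing Implicit Defensive.
Import Order.TTheory GRing.Theory Num.Theory.
Import numFieldNormedType.Exports.
Local Open Scope ring_scope.

Definition enorm {R : realType} {n : nat} (v : 'rV[R]_n) : R :=
  Num.sqrt (\sum_(i < n) v 0 i ^+ 2).

Definition convexf {R : realType} {n : nat} (f : 'rV[R]_n -> R) : Prop :=
  forall (a b : 'rV[R]_n) (t : R), 0 <= t <= 1 ->
    f (t *: a + (1 - t) *: b) <= t * f a + (1 - t) * f b.

Definition gradx {R : realType} {n m : nat} (F : 'rV[R]_n * 'rV[R]_m -> R)
  (x : 'rV[R]_n) (y : 'rV[R]_m) : 'rV[R]_n :=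
  \row_(i < n) derive F (x, y) (delta_mx 0 i, 0).

Definition grady {R : realType} {n m : nat} (F : 'rV[R]_n * 'rV[R]_m -> R)
  (x : 'rV[R]_n) (y : 'rV[R]_m) : 'rV[R]_m :=
  \row_(j < m) derive F (x, y) (0, delta_mx 0 j).

Definition FClass {R : realType} {n m : nat} (Lx Ly Lxy mux muy : R)
  (F : 'rV[R]_n * 'rV[R]_m -> R) : Prop :=
  (forall p, differentiable F p) /\
      (forall x1 x2 y, enorm (gradx F x2 y - gradx F x1 y) <= Lx * enorm (x2 - x1)) /\
      (forall x y1 y2, enorm (grady F x y2 - grady F x y1) <= Ly * enorm (y2 - y1)) /\
      (forall x y1 y2, enorm (gradx F x y2 - gradx F x y1) <= Lxy * enorm (y2 - y1)) /\
      (forall x1 x2 y, enorm (grady F x2 y - grady F x1 y) <= Lxy * enorm (x2 - x1)) /\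
      (forall y, convexf (fun x => F (x, y) - mux / 2 * enorm x ^+ 2)) /\
      (forall x, convexf (fun y => - (F (x, y) + muy / 2 * enorm y ^+ 2))).

Definition alpha {R : realType} (L mu Lxy t : R) : R :=
  1 + 2^-1 * (L ^+ 2 + mu ^+ 2 + 2 * Lxy ^+ 2) * t ^+ 2 - (L + mu) * t
  + 2^-1 * (L - mu) * t * Num.sqrt ((L * t + mu * t - 2) ^+ 2 + 4 * Lxy ^+ 2 * t ^+ 2).

(* Main.v *)
Require Import Defs.
From HB Require Import structures.
From mathcomp Require Import all_boot all_order all_algebra.
From mathcomp Require Import all_classical all_reals all_analysis.
From mathcomp Require Import lra ring.
Import Order.TTheory GRing.Theory Num.Theory.
Import numFieldNormedType.Exports.
Local Open Scope ring_scope.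

Lemma alpha_lb (R : realType) (L mu c C S t : R) : mu <= L -> 0 <= t ->
  C ^+ 2 + S ^+ 2 = 1 ->
  1 - (L + mu) * t + 2^-1 * (L ^+ 2 + mu ^+ 2 + 2 * c ^+ 2) * t ^+ 2
   + (L - mu) * t * (((L + mu) * t - 2) * C + 2 * c * t * S) / 2 <= alpha L mu c t.
Proof.
move=> hmu ht hCS; rewrite /alpha.
set s := Num.sqrt _.
have s0 : 0 <= s by exact: sqrtr_ge0.
have s2 : s ^+ 2 = (L * t + mu * t - 2) ^+ 2 + 4 * c ^+ 2 * t ^+ 2.
  rewrite sqr_sqrtr //; have := sqr_ge0 (L * t + mu * t - 2); have := sqr_ge0 (c * t); nra.
set w := ((L + mu) * t - 2) * C + 2 * c * t * S.
have e : (L * t + mu * t - 2) ^+ 2 + 4 * c ^+ 2 * t ^+ 2 - w ^+ 2 =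
   (((L + mu) * t - 2) * S - 2 * c * t * C) ^+ 2
   + ((L * t + mu * t - 2) ^+ 2 + 4 * c ^+ 2 * t ^+ 2) * (1 - (C ^+ 2 + S ^+ 2)).
  rewrite /w; ring.
have hw : w ^+ 2 <= s ^+ 2.
  by rewrite -subr_ge0 s2 e hCS subrr mulr0 addr0 sqr_ge0.
have hws : w <= s by nra.
have hp : 0 <= (L - mu) * t by apply: mulr_ge0 => //; lra.
have := ler_wpM2l hp hws.
lra.
Qed.


Lemma key (R : realType) (L mu c : R) : 0 < mu -> mu <= L -> 0 <= c ->
  let tmax := 2 * mu / (mu * L + c ^+ 2) in
  let tstar := 2 * ((L + mu) * Num.sqrt (c ^+ 2 + L * mu) + c * (mu - L))
               / ((4 * c ^+ 2 + (L + mu) ^+ 2) * Num.sqrt (c ^+ 2 + L * mu)) in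
  [/\ 0 <= tstar <= tmax,
      (forall t, 0 <= t <= tmax -> t != tstar -> alpha L mu c tstar < alpha L mu c t)
    & alpha L mu c tstar =
      (8 * c * (L ^+ 2 - mu ^+ 2) * Num.sqrt (L * mu + c ^+ 2)
       + (L ^+ 2 - mu ^+ 2) ^+ 2 + 16 * c ^+ 2 * (L * mu + c ^+ 2))
      / ((L + mu) ^+ 2 + 4 * c ^+ 2) ^+ 2].
Proof.
move=> hmu hL hc tmax tstar.
rewrite [L * mu + c ^+ 2]addrC.
have hL0 : 0 < L by lra.
have hLmu : 0 < L * mu by exact: mulr_gt0.
have r0 : 0 < Num.sqrt (c ^+ 2 + L * mu) by rewrite sqrtr_gt0; nra.
have r2 : Num.sqrt (c ^+ 2 + L * mu) ^+ 2 = c ^+ 2 + L * mu by rewrite sqr_sqrtr //; nra.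
have htD0 : tstar = 2 * ((L + mu) * Num.sqrt (c ^+ 2 + L * mu) - c * (L - mu))
   / ((4 * c ^+ 2 + (L + mu) ^+ 2) * Num.sqrt (c ^+ 2 + L * mu)).
  by rewrite /tstar; congr (_ / _); ring.
have htm : tmax = 2 * mu / (mu * L + c ^+ 2) by [].
clearbody tstar tmax.
set r := Num.sqrt (c ^+ 2 + L * mu) in r0 r2 htD0 *.
set E := 4 * c ^+ 2 + (L + mu) ^+ 2.
have E0 : 0 < E by rewrite /E; nra.
have Enz : E != 0 by rewrite gt_eqF.
have rnz : r != 0 by rewrite gt_eqF.
set D := (L + mu) * r - c * (L - mu).
have htD : tstar = 2 * D / (E * r) by rewrite htD0.
have hZ : (L - mu) ^+ 2 + 4 * r ^+ 2 = E by rewrite r2 /E; ring.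
have rc : c <= r.
  have h : 0 < (r - c) * (r + c).
    have e : (r - c) * (r + c) = r ^+ 2 - c ^+ 2 by ring.
    by rewrite e r2 addrAC subrr add0r.
  have rc0 : 0 < r + c by lra.
  rewrite pmulr_lgt0 // in h; lra.
have D0 : 0 <= D.
  have : 0 <= (L + mu) * (r - c) by apply: mulr_ge0; lra.
  have : 0 <= mu * c by apply: mulr_ge0; lra.
  rewrite /D; lra.
have ts0 : 0 <= tstar by rewrite htD divr_ge0 // ?mulr_ge0 //; lra.
have tsmax : tstar <= tmax.
  have e1 : mu * E - D * r = c * (L - mu) * (r - c) + 2 * mu * c ^+ 2 + mu ^+ 2 * (L + mu).
    have -> : D * r = (L + mu) * r ^+ 2 - c * (L - mu) * r by rewrite /D; ring.
    rewrite r2 /E; ring.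
  have e2 : tmax - tstar = 2 * (mu * E - D * r) / (E * r ^+ 2).
    rewrite htm htD.
    have -> : mu * L + c ^+ 2 = r ^+ 2 by rewrite r2; ring.
    by field; rewrite Enz rnz.
  rewrite -subr_ge0 e2 e1 divr_ge0 //.
    have : 0 <= c * (L - mu) * (r - c) by rewrite !mulr_ge0 //; lra.
    have : 0 <= mu * c ^+ 2 by rewrite mulr_ge0 // ?sqr_ge0; lra.
    have : 0 <= mu ^+ 2 * (L + mu) by rewrite mulr_ge0 // ?sqr_ge0; lra.
    lra.
  by rewrite mulr_ge0 // ?sqr_ge0; lra.
set C := - ((L + mu) * (L - mu) + 4 * r * c) / E.
set S := 2 * D / E.
have hCS : C ^+ 2 + S ^+ 2 = 1.
  have lag : ((L + mu) * (L - mu) + 4 * r * c) ^+ 2 + 4 * D ^+ 2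
             = E * ((L - mu) ^+ 2 + 4 * r ^+ 2) by rewrite /D /E; ring.
  have -> : C ^+ 2 + S ^+ 2 = (((L + mu) * (L - mu) + 4 * r * c) ^+ 2 + 4 * D ^+ 2) / E ^+ 2.
    by rewrite /C /S; field.
  by rewrite lag hZ; field.
have lb : forall t, 0 <= t ->
    r ^+ 2 * (t - tstar) ^+ 2 + (1 - 4 * D ^+ 2 / E ^+ 2) <= alpha L mu c t.
  move=> t ht.
  have H := @alpha_lb _ L mu c C S t hL ht hCS.
  have E1 : 1 - (L + mu) * t + 2^-1 * (L ^+ 2 + mu ^+ 2 + 2 * c ^+ 2) * t ^+ 2
   + (L - mu) * t * (((L + mu) * t - 2) * C + 2 * c * t * S) / 2
   = r ^+ 2 * (t - tstar) ^+ 2 + (1 - 4 * D ^+ 2 / E ^+ 2)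
     + (E - ((L - mu) ^+ 2 + 4 * r ^+ 2)) * (t ^+ 2 / 4 - (L + mu) * t / E).
    rewrite htD /C /S /D /E; field.
    by rewrite -/E Enz rnz.
  by rewrite E1 hZ subrr mul0r addr0 in H.
have aS : alpha L mu c tstar = 1 - 4 * D ^+ 2 / E ^+ 2.
  rewrite /alpha.
  have rad : (L * tstar + mu * tstar - 2) ^+ 2 + 4 * c ^+ 2 * tstar ^+ 2 = (2 * c / r) ^+ 2.
    have e : (L * tstar + mu * tstar - 2) ^+ 2 + 4 * c ^+ 2 * tstar ^+ 2
        = 4 * c ^+ 2 * ((L - mu) ^+ 2 + 4 * r ^+ 2) / (E * r ^+ 2).
      rewrite htD /D /E; field.
      by rewrite -/E Enz rnz.
    rewrite e hZ; field.
    by rewrite Enz rnz.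
  rewrite rad sqrtr_sqr ger0_norm; last by rewrite divr_ge0 // ?mulr_ge0 //; lra.
  apply/eqP; rewrite -subr_eq0; apply/eqP.
  apply: eq_trans (_ : _ = D ^+ 2 * ((L - mu) ^+ 2 + 4 * r ^+ 2 - E) / (E ^+ 2 * r ^+ 2)) _.
    rewrite htD /D /E; field.
    by rewrite -/E Enz rnz.
  by rewrite hZ subrr mulr0 mul0r.
split.
- by rewrite ts0 tsmax.
- move=> t /andP[t0 _] tne.
  have := lb t t0.
  have : 0 < r ^+ 2 * (t - tstar) ^+ 2.
    apply: mulr_gt0; first exact: exprn_gt0.
    by rewrite lt0r sqr_ge0 andbT sqrf_eq0 subr_eq0.
  rewrite aS; lra.
rewrite aS -r2.
apply/eqP; rewrite eq_sym -subr_eq0; apply/eqP.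
apply: eq_trans (_ : _ = ((L - mu) ^+ 2 + 4 * r ^+ 2 - E) / E) _.
  rewrite /D /E; field.
  by rewrite -/E Enz.
by rewrite hZ subrr mul0r.
Qed.

Theorem proposition2p3 (R : realType) (n m : nat) (Lx Ly Lxy mux muy : R)
  (F : 'rV[R]_n * 'rV[R]_m -> R) :
  0 < Lx -> 0 < Ly -> 0 <= Lxy -> 0 < mux -> mux <= Lx -> 0 < muy -> muy <= Ly ->
  FClass Lx Ly Lxy mux muy F ->
  let L := Num.max Lx Ly in
  let mu := Num.min mux muy in
  let tmax := 2 * mu / (mu * L + Lxy ^+ 2) in
  let tstar := 2 * ((L + mu) * Num.sqrt (Lxy ^+ 2 + L * mu) + Lxy * (mu - L))
               / ((4 * Lxy ^+ 2 + (L + mu) ^+ 2) * Num.sqrt (Lxy ^+ 2 + L * mu)) in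
  [/\ 0 <= tstar <= tmax,
      (forall t, 0 <= t <= tmax -> t != tstar -> alpha L mu Lxy tstar < alpha L mu Lxy t)
    & alpha L mu Lxy tstar =
      (8 * Lxy * (L ^+ 2 - mu ^+ 2) * Num.sqrt (L * mu + Lxy ^+ 2)
       + (L ^+ 2 - mu ^+ 2) ^+ 2 + 16 * Lxy ^+ 2 * (L * mu + Lxy ^+ 2))
      / ((L + mu) ^+ 2 + 4 * Lxy ^+ 2) ^+ 2].
Proof.
move=> hLx hLy hc hmux hmuxL hmuy hmuyL _ L mu.
have hmu : 0 < mu by rewrite /mu lt_min hmux hmuy.
have hmuL : mu <= L.
  apply: (le_trans (y := mux)); first by rewrite /mu ge_min lexx.
  by apply: (le_trans hmuxL); rewrite /L le_max lexx.
exact: (@key R L mu Lxy hmu hmuL hc).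
Qed.
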